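(* Let $M=2^\lambda$, let $\mathcal{S}$ be the $M$-PSK signal set with labelling $\mu(m)=e^{j(2m+1)\pi/M}$, and let $n\ge1$. Let $X$ be the bit-wise XOR map on $\mathbb{Z}_M^n\times\mathbb{Z}_M^n$, $X(u,v)=(u_1\oplus v_1,\dots,u_n\oplus v_n)$, where $\oplus$ is the bitwise XOR of the $\lambda$-bit binary representations. Then $X$ is a Latin square for the $n\times n$ system, and for every nonzero $\Delta x=[\Delta x_A^T\;\Delta x_B^T]^T\in\Delta\mathcal{S}^{2n}$ such that for each $1\le i\le n$ either $\Delta x_{A,i}=\Delta x_{B,i}$ or $\Delta x_{A,i}=-\Delta x_{B,i}$, the map $X$ removes $[\mathrm{span}(\Delta x)]^{\perp}$.
   Context: $M$-PSK signal set: $\mathcal{S}=\{e^{j(2m+1)\pi/M}: m\in\mathbb{Z}_M\}$, labelled by $\mu(m)=e^{j(2m+1)\pi/M}$; for $u\in\mathbb{Z}_M^n$, $\mu(u)=(\mu(u_1),\dots,\mu(u_n))^T$. $\Delta\mathcal{S}=\{s-s':s,s'\in\mathcal{S}\}$. For $V\subseteq\mathbb{C}^N$, $V^\perp=\{y:y^Tv=0\ \forall v\in V\}$. A Latin square for the $n\times n$ system is a map $L:\mathbb{Z}_M^{n}\times\mathbb{Z}_M^{n}\to\Sigma$ with no symbol repeated in any row or column. For nonzero $w\in\mathbb{C}^{2n}$, $L$ removes $[\mathrm{span}(w)]^\perp$ if $L(u,v)=L(u',v')$ whenever $[\mu(u)^T-\mu(u')^T\;\;\mu(v)^T-\mu(v')^T]^T\in\mathrm{span}(w)\setminus\{0\}$.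 *)

(* Defs.v *)
From HB Require Import structures.
From mathcomp Require Import all_boot all_order all_algebra all_field.
Set Implicit Arguments. Unset Strict Implicit. Unset Printing Implicit Defensive.
Import Order.TTheory GRing.Theory Num.Theory.
Local Open Scope ring_scope.

Notation ZM l := 'I_(2 ^ l)%N.
Notation ZMvec n l := {ffun 'I_n -> ZM l}.

(* bitwise XOR of l-bit representations; Nat.lxor a b < 2^l already,
   the reduction mod 2^l is only there to land in 'I_(2^l) and is the identity. *)
Definition xorZ (l : nat) (a b : ZM l) : ZM l :=
  Ordinal (ltn_pmod (Nat.lxor a b) (expn_gt0 2 l)).

Definition Xmap (n l : nat) (u v : ZMvec n l) : ZMvec n l :=
  [ffun i => xorZ (u i) (v i)].

(* PSK labelling mu(m) = e^{j(2m+1)pi/M}; M.-root (-1) = e^{j pi/M} in algC. *)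
Definition mu (l : nat) (m : ZM l) : algC :=
  ((2 ^ l)%N.-root (-1)) ^+ (2 * m + 1)%N.

Definition muvec (n l : nat) (u : ZMvec n l) : 'cV[algC]_n := \col_i mu (u i).

Definition inDeltaS (l : nat) (z : algC) : Prop :=
  exists m m' : ZM l, z = mu m - mu m'.

Definition latin_square (n l : nat) (Sigma : Type) (L : ZMvec n l -> ZMvec n l -> Sigma) : Prop :=
  (forall u v v', L u v = L u v' -> v = v') /\
  (forall v u u', L u v = L u' v -> u = u').

Definition removes_span_perp (n l : nat) (Sigma : Type)
    (L : ZMvec n l -> ZMvec n l -> Sigma) (w : 'cV[algC]_(n + n)) : Prop :=
  forall u u' v v' : ZMvec n l,
    let d := col_mx (muvec u - muvec u') (muvec v - muvec v') in
    (exists c : algC, d = c *: w) -> d != 0 -> L u v = L u' v'.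

(* Main.v *)
Require Import Defs.
From HB Require Import structures.
From mathcomp Require Import all_boot all_order all_algebra all_field.
From mathcomp Require Import ring zify.
From Stdlib Require PeanoNat.
Import Order.TTheory GRing.Theory Num.Theory.
Local Open Scope ring_scope.

Section R.
Variable l : nat.
Let M := (2 ^ l)%N.
Let r : algC := M.-root (-1).
Lemma M_gt0 : (0 < M)%N. Proof. by rewrite expn_gt0. Qed.
Lemma rM : r ^+ M = -1. Proof. exact: (rootCK M_gt0). Qed.
Lemma norm_r : `|r| = 1.
Proof. by rewrite /r norm_rootC normrN1 rootC1 // M_gt0. Qed.
Lemma N1neq1 : (-1 : algC) != 1.
Proof.
apply/eqP => h. have : (2%:R : algC) == 0 by rewrite -[2%N]/(1 + 1)%N natrD -{1}h addNr.
by rewrite pnatr_eq0.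
Qed.
Lemma prim_r : (2 * M)%N.-primitive_root r.
Proof.
have h2 : r ^+ (2 * M) = 1 by rewrite mulnC exprM rM expr2 mulN1r opprK.
have hp : (0 < 2 * M)%N by rewrite muln_gt0 M_gt0.
have [m pm dm] := prim_order_exists hp h2.
suff -> : (2 * M)%N = m by [].
have : (m %| 2 ^ l.+1)%N by rewrite expnS.
case/(dvdn_pfactor m l.+1 (isT : prime 2)) => j hj hm; subst m.
rewrite -expnS; have [hjl|hjl] := ltnP j l.+1; last by have -> : j = l.+1 by apply/eqP; rewrite eqn_leq hj hjl.
have : (2 ^ j %| M)%N by rewrite dvdn_exp2l // -ltnS.
rewrite (prim_order_dvd pm) rM => /eqP h; by case/eqP: N1neq1.
Qed.
Lemma mu_norm (a : ZM l) : mu a * (mu a)^* = 1.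
Proof. by rewrite -normCK /mu normrX norm_r !expr1n. Qed.

Lemma mu_inj (a b : ZM l) : mu a = mu b -> a = b.
Proof.
move/eqP; rewrite /mu (eq_prim_root_expr prim_r) => h.
apply: val_inj => /=. have ha := ltn_ord a; have hb := ltn_ord b.
move: h; rewrite /M in ha hb *; rewrite !modn_small; try lia.
Qed.
End R.
Module N := PeanoNat.Nat.

Lemma expn_pow a b : (a ^ b)%N = Nat.pow a b.
Proof. elim: b => [//|b IH]. by rewrite expnS IH. Qed.

Lemma testbit_small (m k : nat) : (m < 2 ^ k)%N -> Nat.testbit m k = false.
Proof.
move=> H. rewrite -(N.add_0_l k) -N.div_pow2_bits N.div_small //.
apply/ssrnat.ltP. by rewrite -expn_pow.
Qed.

Lemma lxor_pow2_small (m k : nat) : (m < 2 ^ k)%N -> Nat.lxor m (2 ^ k) = (m + 2 ^ k)%N.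
Proof.
move=> H. rewrite expn_pow -N.add_nocarry_lxor // .
apply: N.bits_inj => j. rewrite N.land_spec N.pow2_bits_eqb N.bits_0.
case: (N.eqb_spec k j) => [<-|_]; last by rewrite andbF.
by rewrite testbit_small.
Qed.

Lemma lxor_lt (l a b : nat) : (a < 2 ^ l)%N -> (b < 2 ^ l)%N -> (Nat.lxor a b < 2 ^ l)%N.
Proof.
move=> Ha Hb.
have hp : (0 < 2 ^ l)%N by rewrite expn_gt0.
have H : Nat.div (Nat.lxor a b) (2 ^ l) = 0.
  rewrite expn_pow -N.shiftr_div_pow2 N.shiftr_lxor !N.shiftr_div_pow2 !N.div_small //.
  1,2: by apply/ssrnat.ltP; rewrite -expn_pow.
have := N.div_small_iff (Nat.lxor a b) (2 ^ l).
move=> -[]; first by move=> h0; move: hp; rewrite h0.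
move=> h _; apply/ssrnat.ltP; exact: h.
Qed.
Lemma conj_inv (x : algC) : x * x^* = 1 -> x != 0 /\ x^* = x^-1.
Proof.
move=> h. have xnz : x != 0 by apply: contra_eq_neq h => ->; rewrite mul0r eq_sym oner_eq0.
split=> //. by rewrite -[x^*]mul1r -(mulVf xnz) -mulrA h mulr1.
Qed.

Lemma unit_sum (a b c e : algC) : a * a^* = 1 -> b * b^* = 1 -> c * c^* = 1 ->
  e * e^* = 1 -> a + e = b + c ->
  (a = b /\ e = c) \/ (a = c /\ e = b) \/ (a = - e /\ b = - c).
Proof.
move=> /conj_inv[az ac] /conj_inv[bz bc] /conj_inv[cz cc] /conj_inv[ez ec] hs.
have [s0|snz] := eqVneq (a + e) 0.
  by right; right; split; apply/eqP; rewrite -addr_eq0 ?s0 // -hs s0.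
have h1 : (a + e)^* * (a * e) = a + e.
  rewrite rmorphD /= ac ec mulrDl mulrA mulVf // mul1r mulrCA mulVf // mulr1 addrC //.
have h2 : (a + e)^* * (b * c) = a + e.
  rewrite hs rmorphD /= bc cc mulrDl mulrA mulVf // mul1r mulrCA mulVf // mulr1 addrC //.
have hp : a * e = b * c.
  apply/eqP; rewrite -subr_eq0. 
  have : (a + e)^* * (a * e - b * c) == 0 by rewrite mulrBr h1 h2 subrr.
  by rewrite mulf_eq0 conjC_eq0 (negPf snz).
have : (a - b) * (a - c) == 0.
  have -> : (a - b) * (a - c) = a * a - a * (b + c) + b * c by ring.
  by rewrite -hs -hp; apply/eqP; ring.
rewrite mulf_eq0 !subr_eq0 => /orP[/eqP ab|/eqP ac'].
  left; split=> //. by apply: (addrI a); rewrite hs ab.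
right; left; split=> //. apply: (addrI a); by rewrite hs ac' addrC.
Qed.

Lemma mu_neg l (a b : ZM l) : mu b = - mu a ->
  exists k, l = k.+1 /\ nat_of_ord b = Nat.lxor a (2 ^ k)%N.
Proof.
move=> h.
have hr : - mu a = ((2^l)%N.-root (-1)) ^+ (2^l + (2*a+1))%N by rewrite exprD rM mulN1r.
move: h; rewrite hr /mu => /eqP; rewrite (eq_prim_root_expr (prim_r l)).
have ha := ltn_ord a; have hb := ltn_ord b.
case: l a b hr ha hb => [|k] a b _ ha hb h.
  exfalso; move: h ha hb; move: (nat_of_ord a) (nat_of_ord b) => x y.
  rewrite expn0 => h ha hb.
  have ea : x = 0%N by lia.
  have eb : y = 0%N by lia.
  by move: h; rewrite ea eb.
exists k; split => //.
move: h ha hb; move: (nat_of_ord a) (nat_of_ord b) => {a b} a b.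
rewrite !expnS; set P := (2 ^ k)%N => h ha hb.
have hP : (0 < P)%N by rewrite expn_gt0.
case: (ltnP a P) => haP.
  move: h; rewrite !modn_small; try lia.
  move/eqP => h. rewrite lxor_pow2_small //; lia.
have [a' ea'] : exists a', a = (a' + P)%N by exists (a - P)%N; lia.
have ha' : (a' < P)%N by lia.
move: h; have -> : (2 * P + (2 * a + 1) = (2 * a' + 1) + 2 * (2 * P))%N by lia.
rewrite modnDr !modn_small; try lia.
move/eqP => h. rewrite ea' -lxor_pow2_small // N.lxor_assoc N.lxor_nilpotent N.lxor_0_r; lia.
Qed.

Lemma lxor_cancel_l a b c : Nat.lxor a b = Nat.lxor a c -> b = c.
Proof.
move=> h; rewrite -(N.lxor_0_l b) -(N.lxor_nilpotent a) N.lxor_assoc h.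
by rewrite -N.lxor_assoc N.lxor_nilpotent N.lxor_0_l.
Qed.

Lemma xor_key l (u u' v v' : ZM l) :
  (mu u - mu u' = mu v - mu v') \/ (mu u - mu u' = -(mu v - mu v')) ->
  Nat.lxor u v = Nat.lxor u' v'.
Proof.
case=> h.
  have h' : mu u + mu v' = mu u' + mu v.
    by rewrite -(subrK (mu u') (mu u)) h; ring.
  case: (@unit_sum _ _ _ _ (mu_norm l u) (mu_norm l u') (mu_norm l v) (mu_norm l v') h')
    => [[/(@mu_inj l _ _) e1 /(@mu_inj l _ _) e2]|[[/(@mu_inj l _ _) e1 /(@mu_inj l _ _) e2]|[e1 e2]]].
  - by rewrite e1 e2.
  - by rewrite e1 e2 !N.lxor_nilpotent.
  have [k [hk ek]] : exists k, l = k.+1 /\ nat_of_ord v' = Nat.lxor u (2 ^ k)%N.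
    by apply: mu_neg; rewrite e1 opprK.
  have [k' [hk' ek']] : exists k, l = k.+1 /\ nat_of_ord v = Nat.lxor u' (2 ^ k)%N.
    by apply: mu_neg; rewrite e2 opprK.
  have ekk : k' = k by move: hk'; rewrite hk => -[].
  rewrite ek ek' ekk -!N.lxor_assoc (N.lxor_comm u u') //.
have h' : mu u + mu v = mu u' + mu v'.
  by rewrite -(subrK (mu u') (mu u)) h; ring.
case: (@unit_sum _ _ _ _ (mu_norm l u) (mu_norm l u') (mu_norm l v') (mu_norm l v) h')
  => [[/(@mu_inj l _ _) e1 /(@mu_inj l _ _) e2]|[[/(@mu_inj l _ _) e1 /(@mu_inj l _ _) e2]|[e1 e2]]].
- by rewrite e1 e2.
- by rewrite e1 e2 N.lxor_comm.
have [k [hk ek]] : exists k, l = k.+1 /\ nat_of_ord v = Nat.lxor u (2 ^ k)%N.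
  by apply: mu_neg; rewrite e1 opprK.
have [k' [hk' ek']] : exists k, l = k.+1 /\ nat_of_ord v' = Nat.lxor u' (2 ^ k)%N.
  by apply: mu_neg; rewrite e2 opprK.
have ekk : k' = k by move: hk'; rewrite hk => -[].
by rewrite ek ek' ekk -!N.lxor_assoc !N.lxor_nilpotent !N.lxor_0_l.
Qed.

Theorem lemma5 (l n : nat) (hn : (0 < n)%N) :
  latin_square (@Xmap n l) /\
  (forall dA dB : 'cV[algC]_n,
     (forall i, inDeltaS l (dA i 0)) ->
     (forall i, inDeltaS l (dB i 0)) ->
     col_mx dA dB != 0 ->
     (forall i, dA i 0 = dB i 0 \/ dA i 0 = - dB i 0) ->
     removes_span_perp (@Xmap n l) (col_mx dA dB)).
Proof.
split.
  split=> [u v v' h|v u u' h]; apply/ffunP => i; move/ffunP: h => /(_ i);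
    rewrite !ffunE => /(congr1 val) /=; rewrite !modn_small ?lxor_lt //;
    move=> h; apply: val_inj => /=.
    exact: lxor_cancel_l h.
  apply: (@lxor_cancel_l (v i)); by rewrite N.lxor_comm h N.lxor_comm.
move=> dA dB _ _ _ hpm u u' v v' /= [cc hd] _.
apply/ffunP => i; rewrite !ffunE; apply: val_inj => /=; congr (_ %% _)%N.
apply: xor_key.
rewrite scale_col_mx in hd; case/eq_col_mx: hd => h1 h2.
have := congr1 (fun m : 'cV[algC]_n => m i 0) h1; have := congr1 (fun m : 'cV[algC]_n => m i 0) h2.
rewrite !mxE => -> ->.
case: (hpm i) => ->; [left | right]; by rewrite ?mulrN.
Qed.
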